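(* Let $A,B,D$ be lattices with finite generating sets $X_0,Y_0,P$ respectively, let $D$ satisfy Dean's condition (D) for $P$, and let $g\colon A\to D$, $h\colon B\to D$ be bounded epimorphisms. Let $E:=g(X_0)\cup h(Y_0)\cup P$ and $$Z:=\{(x,\alpha_h g(x)) : x\in X_0\}\cup\{(\beta_g h(y),y): y\in Y_0\}\cup\{(\alpha_g(d),\beta_h(d)) : d\in E\}\cup\{(\beta_g(d),\alpha_h(d)): d\in E\}\subseteq A\times B.$$ Let $X$ be the set of first components and $Y$ the set of second components of elements of $Z$ (these are finite generating sets of $A$ and $B$), and let $\langle Z\rangle$ be the sublattice of $A\times B$ generated by $Z$. Then for every $k\in\mathbb N$: (1) for all $b\in G_{Y,k}$ we have $(\alpha_{g,k}(h(b)),\,b)\in\langle Z\rangle$; (2) for all $a\in H_{X,k}$ we have $(a,\,\beta_{h,k}(g(a)))\in\langle Z\rangle$. Here $G,H,\alpha_{g,k},\beta_{h,k}$ are computed with respect to the generating set $X$ of $A$ (for $g$) and $Y$ of $B$ (for $h$).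
   Context: A lattice homomorphism $g\colon A\to D$ is lower bounded if for every $d\in D$ the set $\{x\in A : g(x)\ge d\}$ is empty or has a least element; upper bounded if for every $d$ the set $\{x: g(x)\le d\}$ is empty or has a greatest element; bounded if both. For a bounded epimorphism $g$, $\beta_g(d):=\bigwedge g^{-1}(d)$ is the least and $\alpha_g(d):=\bigvee g^{-1}(d)$ the greatest preimage of $d$. Dean's condition (D) for a lattice $D$ with finite generating set $P$: for all finite $S,T\subseteq D$ with $\bigwedge S\le\bigvee T$, either some $s\in S$ has $s\le\bigvee T$, or some $t\in T$ has $\bigwedge S\le t$, or some $p\in P$ has $\bigwedge S\le p\le\bigvee T$. For a lattice $A$ with finite generating set $X$ and $W\subseteq A$, let $W^\wedge:=\{\bigwedge U: U\subseteq W\text{ finite}\}$ and $W^\vee:=\{\bigvee U: U\subseteq W \text{ finite}\}$, with the conventions $\bigwedge\emptyset:=\bigvee X$ and $\bigvee\emptyset:=\bigwedge X$. Define $G_{X,0}:=X$, $H_{X,k}:=G_{X,k}^\wedge$, $G_{X,k+1}:=H_{X,k}^\vee$ for $k\in\mathbb N$. For an epimorphism $g\colon A\to D$, $k\in\mathbb N$, $d\in D$: $\alpha_{g,k}(d):=\bigvee\{w\in G_{X,k}: g(w)\le d\}$ and $\beta_{g,k}(d):=\bigwedge\{w\in H_{X,k}: g(w)\ge d\}$. *)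

(* Defs.v *)
(* lattices are MathComp's [latticeType d] (no bounds assumed). *)
From HB Require Import structures.
From mathcomp Require Import all_boot all_order.
Set Implicit Arguments. Unset Strict Implicit. Unset Printing Implicit Defensive.
Import Order.LTheory.
Local Open Scope order_scope.

Definition meet_ne {d} {T : latticeType d} (x : T) (s : seq T) : T :=
  foldr Order.meet x s.
Definition join_ne {d} {T : latticeType d} (x : T) (s : seq T) : T :=
  foldr Order.join x s.

(* [is_meet X U w] : w = /\ U, with the convention /\ [::] := \/ X
   (undefined, i.e. no value, if X is empty). *)
Definition is_meet {d} {T : latticeType d} (X U : seq T) (w : T) : Prop :=
  match U with
  | [::] => if X is x :: xs then w = join_ne x xs else False
  | u :: us => w = meet_ne u us
  end.
(* [is_join X U w] : w = \/ U, with the convention \/ [::] := /\ X. *)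
Definition is_join {d} {T : latticeType d} (X U : seq T) (w : T) : Prop :=
  match U with
  | [::] => if X is x :: xs then w = meet_ne x xs else False
  | u :: us => w = join_ne u us
  end.

Definition meetcl {d} {T : latticeType d} (X : seq T) (W : T -> Prop) : T -> Prop :=
  fun w => exists U : seq T, (forall u, u \in U -> W u) /\ is_meet X U w.
Definition joincl {d} {T : latticeType d} (X : seq T) (W : T -> Prop) : T -> Prop :=
  fun w => exists U : seq T, (forall u, u \in U -> W u) /\ is_join X U w.

Fixpoint GX {d} {T : latticeType d} (X : seq T) (k : nat) : T -> Prop :=
  match k with
  | 0 => fun w => w \in X
  | k'.+1 => joincl X (meetcl X (GX X k'))
  end.
Definition HX {d} {T : latticeType d} (X : seq T) (k : nat) : T -> Prop :=
  meetcl X (GX X k).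

(* a = \/ S (resp. /\ S) for a finite set S, given by an enumerating list *)
Definition is_join_set {d} {T : latticeType d} (X : seq T) (S : T -> Prop) (a : T) :=
  exists U : seq T, (forall w, w \in U <-> S w) /\ is_join X U a.
Definition is_meet_set {d} {T : latticeType d} (X : seq T) (S : T -> Prop) (a : T) :=
  exists U : seq T, (forall w, w \in U <-> S w) /\ is_meet X U a.

Definition alpha_k {dA dD} {A : latticeType dA} {D : latticeType dD}
  (X : seq A) (g : A -> D) (k : nat) (dd : D) (a : A) : Prop :=
  is_join_set X (fun w => GX X k w /\ g w <= dd) a.
Definition beta_k {dA dD} {A : latticeType dA} {D : latticeType dD}
  (X : seq A) (g : A -> D) (k : nat) (dd : D) (a : A) : Prop :=
  is_meet_set X (fun w => HX X k w /\ dd <= g w) a.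

Definition lattice_hom {dA dD} {A : latticeType dA} {D : latticeType dD} (g : A -> D) :=
  (forall x y, g (Order.meet x y) = Order.meet (g x) (g y)) /\
  (forall x y, g (Order.join x y) = Order.join (g x) (g y)).
Definition lattice_epi {dA dD} {A : latticeType dA} {D : latticeType dD} (g : A -> D) :=
  lattice_hom g /\ (forall dd, exists x, g x = dd).

Definition lower_bounded {dA dD} {A : latticeType dA} {D : latticeType dD} (g : A -> D) :=
  forall dd : D, (forall x, ~ (dd <= g x)) \/
    (exists m, dd <= g m /\ forall x, dd <= g x -> m <= x).
Definition upper_bounded {dA dD} {A : latticeType dA} {D : latticeType dD} (g : A -> D) :=
  forall dd : D, (forall x, ~ (g x <= dd)) \/
    (exists m, g m <= dd /\ forall x, g x <= dd -> x <= m).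
Definition bounded {dA dD} {A : latticeType dA} {D : latticeType dD} (g : A -> D) :=
  lower_bounded g /\ upper_bounded g.

Definition is_least_preimage {dA dD} {A : latticeType dA} {D : latticeType dD}
  (g : A -> D) (dd : D) (m : A) := g m = dd /\ forall x, g x = dd -> m <= x.
Definition is_greatest_preimage {dA dD} {A : latticeType dA} {D : latticeType dD}
  (g : A -> D) (dd : D) (m : A) := g m = dd /\ forall x, g x = dd -> x <= m.

Inductive gen {T : Type} (m j : T -> T -> T) (S : T -> Prop) : T -> Prop :=
| gen_base x : S x -> gen m j S x
| gen_meet x y : gen m j S x -> gen m j S y -> gen m j S (m x y)
| gen_join x y : gen m j S x -> gen m j S y -> gen m j S (j x y).

Definition generates {d} {T : latticeType d} (X : seq T) :=
  forall a : T, gen Order.meet Order.join (fun x => x \in X) a.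

Definition pmeet {dA dB} {A : latticeType dA} {B : latticeType dB} (p q : A * B) : A * B :=
  (Order.meet p.1 q.1, Order.meet p.2 q.2).
Definition pjoin {dA dB} {A : latticeType dA} {B : latticeType dB} (p q : A * B) : A * B :=
  (Order.join p.1 q.1, Order.join p.2 q.2).
Definition in_sublat_gen {dA dB} {A : latticeType dA} {B : latticeType dB}
  (Z : seq (A * B)) (p : A * B) : Prop :=
  gen pmeet pjoin (fun q => q \in Z) p.

Definition dean_D {d} {D : latticeType d} (P : seq D) :=
  forall (s : D) (ss : seq D) (t : D) (ts : seq D),
    meet_ne s ss <= join_ne t ts ->
    (exists2 s', s' \in s :: ss & s' <= join_ne t ts) \/
    (exists2 t', t' \in t :: ts & meet_ne s ss <= t') \/
    (exists2 p, p \in P & meet_ne s ss <= p /\ p <= join_ne t ts).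

(* The list Z, given the (least/greatest preimage) maps *)
Definition Zlist {dA dB dD} {A : latticeType dA} {B : latticeType dB} {D : latticeType dD}
  (X0 : seq A) (Y0 : seq B) (P : seq D) (g : A -> D) (h : B -> D)
  (ag bg : D -> A) (ah bh : D -> B) : seq (A * B) :=
  let E := map g X0 ++ map h Y0 ++ P in
  [seq (x, ah (g x)) | x <- X0] ++ [seq (bg (h y), y) | y <- Y0] ++
  [seq (ag e, bh e) | e <- E] ++ [seq (bg e, ah e) | e <- E].

(* Main.v *)
Require Import Defs.
From HB Require Import structures.
From mathcomp Require Import all_boot all_order.
Import Order.LTheory.
Local Open Scope order_scope.


Section Generic.
Context {d : Order.disp_t} {T : latticeType d}.

Lemma meet_ne_le (u : T) us x : x \in u :: us -> meet_ne u us <= x.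
Proof.
elim: us x => [|v us IH] x /=; first by rewrite inE => /eqP ->.
rewrite in_cons => /predU1P [->|]; first by apply: le_trans (leIr _ _) _; apply: IH; rewrite inE eqxx.
rewrite in_cons => /predU1P [->|H]; first exact: leIl.
by apply: le_trans (leIr _ _) _; apply: IH; rewrite in_cons H orbT.
Qed.

Lemma le_meet_ne (u : T) us w : (forall x, x \in u :: us -> w <= x) -> w <= meet_ne u us.
Proof.
elim: us => [|v us IH] /= H; first by apply: H; rewrite inE eqxx.
rewrite lexI H ?in_cons ?eqxx ?orbT //=; apply: IH => x; rewrite in_cons => /predU1P [->|Hx].
  by apply: H; rewrite inE eqxx.
by apply: H; rewrite !in_cons Hx !orbT.
Qed.

Lemma join_ne_ge (u : T) us x : x \in u :: us -> x <= join_ne u us.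
Proof.
elim: us x => [|v us IH] x /=; first by rewrite inE => /eqP ->.
rewrite in_cons => /predU1P [->|]; first by apply: lexUr; apply: IH; rewrite inE eqxx.
rewrite in_cons => /predU1P [->|H]; first exact: leUl.
by apply: lexUr; apply: IH; rewrite in_cons H orbT.
Qed.

Lemma join_ne_le (u : T) us w : (forall x, x \in u :: us -> x <= w) -> join_ne u us <= w.
Proof.
elim: us => [|v us IH] /= H; first by apply: H; rewrite inE eqxx.
rewrite leUx H ?in_cons ?eqxx ?orbT //=; apply: IH => x; rewrite in_cons => /predU1P [->|Hx].
  by apply: H; rewrite inE eqxx.
by apply: H; rewrite !in_cons Hx !orbT.
Qed.

Lemma gen_mono (m j : T -> T -> T) (S S' : T -> Prop) a :
  (forall x, S x -> S' x) -> gen m j S a -> gen m j S' a.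
Proof.
move=> HS; elim=> [x /HS|x y _ IHx _ IHy|x y _ IHx _ IHy].
- exact: gen_base.
- exact: gen_meet.
- exact: gen_join.
Qed.

Lemma gen_bounds (x0 : T) xs : generates (x0 :: xs) ->
  forall a, meet_ne x0 xs <= a /\ a <= join_ne x0 xs.
Proof.
move=> HG a; elim: (HG a) => [x Hx|x y _ [H1 H2] _ [H3 H4]|x y _ [H1 H2] _ [H3 H4]].
- by split; [apply: meet_ne_le | apply: join_ne_ge].
- by split; [rewrite lexI H1 H3 | apply: leIxl].
- by split; [apply: lexUl | rewrite leUx H2 H4].
Qed.

Lemma meetcl_mono (X : seq T) (W W' : T -> Prop) u :
  (forall x, W x -> W' x) -> meetcl X W u -> meetcl X W' u.
Proof. by move=> H [U [HU HM]]; exists U; split => // x /HU /H. Qed.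

Lemma joincl_mono (X : seq T) (W W' : T -> Prop) u :
  (forall x, W x -> W' x) -> joincl X W u -> joincl X W' u.
Proof. by move=> H [U [HU HM]]; exists U; split => // x /HU /H. Qed.

Lemma GX_S (X : seq T) j u : GX X j u -> GX X j.+1 u.
Proof.
elim: j u => [|j IH] u /=.
  move=> Hu; exists [:: u]; split => //= x; rewrite inE => /eqP ->.
  by exists [:: u]; split => // y; rewrite inE => /eqP ->.
by apply: joincl_mono => x; apply: meetcl_mono.
Qed.

Lemma GX_mono (X : seq T) j k u : (j <= k)%N -> GX X j u -> GX X k u.
Proof.
elim: k => [|k IH]; first by rewrite leqn0 => /eqP ->.
rewrite leq_eqVlt => /orP [/eqP -> //|]; rewrite ltnS => /IH H /H; exact: GX_S.
Qed.

Lemma G_in_H (X : seq T) j u : GX X j u -> HX X j u.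
Proof. by move=> H; exists [:: u]; split => // x; rewrite inE => /eqP ->. Qed.

Lemma H_in_G (X : seq T) j u : HX X j u -> GX X j.+1 u.
Proof. by move=> H; exists [:: u]; split => // x; rewrite inE => /eqP ->. Qed.

Lemma HX_mono (X : seq T) j k u : (j <= k)%N -> HX X j u -> HX X k u.
Proof. by move=> Hjk; apply: meetcl_mono => x; apply: GX_mono. Qed.

Lemma X_in_G (X : seq T) j x : x \in X -> GX X j x.
Proof. by move=> Hx; apply: (@GX_mono X 0) => //. Qed.

Lemma top_in_H (x0 : T) xs j : HX (x0 :: xs) j (join_ne x0 xs).
Proof. by exists [::]; split. Qed.

Lemma bot_in_H (x0 : T) xs j : HX (x0 :: xs) j (meet_ne x0 xs).
Proof. by exists (x0 :: xs); split => // x Hx; apply: X_in_G. Qed.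

Lemma bot_in_G (x0 : T) xs j : GX (x0 :: xs) j.+1 (meet_ne x0 xs).
Proof. by exists [::]; split. Qed.

Lemma top_in_G (x0 : T) xs j : GX (x0 :: xs) j.+1 (join_ne x0 xs).
Proof.
exists (x0 :: xs); split => // x Hx; apply: G_in_H; exact: X_in_G.
Qed.

Lemma GX_nil j u : GX (@nil T) j u -> False.
Proof.
elim: j u => [|j IH] u /=; first by [].
move=> [[|v U] [HU HM]] //=.
have [[|w W] [HW HW']] := HU v (mem_head _ _) => //.
exact: (IH w (HW w (mem_head _ _))).
Qed.

Lemma HX_nil j u : HX (@nil T) j u -> False.
Proof.
move=> [[|v U] [HU HM]] //=; by apply: GX_nil; apply: HU; apply: mem_head.
Qed.

End Generic.

Section Hom.
Context {d d' : Order.disp_t} {T : latticeType d} {T' : latticeType d'}.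

Lemma hom_meet_ne (g : T -> T') u us : lattice_hom g ->
  g (meet_ne u us) = meet_ne (g u) (map g us).
Proof. by move=> [Hm Hj]; elim: us => [|v us IH] //=; rewrite Hm IH. Qed.

Lemma hom_join_ne (g : T -> T') u us : lattice_hom g ->
  g (join_ne u us) = join_ne (g u) (map g us).
Proof. by move=> [Hm Hj]; elim: us => [|v us IH] //=; rewrite Hj IH. Qed.

Lemma hom_mono (g : T -> T') x y : lattice_hom g -> x <= y -> g x <= g y.
Proof.
by move=> [Hm Hj] /join_idPr H; apply/join_idPr; rewrite -Hj H.
Qed.

Lemma meetcl_transfer (R : T -> T' -> Prop) (X : seq T) (Y : seq T') W W' :
  (forall a b c e, R a b -> R c e -> R (a `&` c) (b `&` e)) ->
  (forall w, is_meet X [::] w -> exists2 c, is_meet Y [::] c & R w c) ->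
  (forall u, W u -> exists2 c, W' c & R u c) ->
  forall u, meetcl X W u -> exists2 c, meetcl Y W' c & R u c.
Proof.
move=> HR Hb HW u [[|u0 us] [HU HM]].
  by have [c Hc Hc'] := Hb u HM; exists c => //; exists [::].
rewrite /= in HM; subst u.
suff [c0 [cs [Hcs Hr]]] : exists c0 cs, (forall c, c \in c0 :: cs -> W' c) /\
    R (meet_ne u0 us) (meet_ne c0 cs).
  by exists (meet_ne c0 cs) => //; exists (c0 :: cs).
elim: us HU => [|u1 us IH] HU.
  have [c Hc Hr] := HW u0 (HU u0 (mem_head _ _)).
  by exists c, [::]; split => // x; rewrite inE => /eqP ->.
have [|c0 [cs [Hcs Hr]]] := IH.
  by move=> x; rewrite in_cons => /predU1P [->|Hx]; apply: HU; rewrite !in_cons ?eqxx ?Hx ?orbT.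
have Hu1 : u1 \in u0 :: u1 :: us by rewrite !in_cons eqxx orbT.
have [c1 Hc1 Hr1] := HW u1 (HU u1 Hu1).
exists c0, (c1 :: cs); split; last exact: HR.
move=> x; rewrite !in_cons => /orP [/eqP ->|/orP [/eqP -> //|Hx]].
  by apply: Hcs; rewrite mem_head.
by apply: Hcs; rewrite in_cons Hx orbT.
Qed.

Lemma joincl_transfer (R : T -> T' -> Prop) (X : seq T) (Y : seq T') W W' :
  (forall a b c e, R a b -> R c e -> R (a `|` c) (b `|` e)) ->
  (forall w, is_join X [::] w -> exists2 c, is_join Y [::] c & R w c) ->
  (forall u, W u -> exists2 c, W' c & R u c) ->
  forall u, joincl X W u -> exists2 c, joincl Y W' c & R u c.
Proof.
move=> HR Hb HW u [[|u0 us] [HU HM]].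
  by have [c Hc Hc'] := Hb u HM; exists c => //; exists [::].
rewrite /= in HM; subst u.
suff [c0 [cs [Hcs Hr]]] : exists c0 cs, (forall c, c \in c0 :: cs -> W' c) /\
    R (join_ne u0 us) (join_ne c0 cs).
  by exists (join_ne c0 cs) => //; exists (c0 :: cs).
elim: us HU => [|u1 us IH] HU.
  have [c Hc Hr] := HW u0 (HU u0 (mem_head _ _)).
  by exists c, [::]; split => // x; rewrite inE => /eqP ->.
have [|c0 [cs [Hcs Hr]]] := IH.
  by move=> x; rewrite in_cons => /predU1P [->|Hx]; apply: HU; rewrite !in_cons ?eqxx ?Hx ?orbT.
have Hu1 : u1 \in u0 :: u1 :: us by rewrite !in_cons eqxx orbT.
have [c1 Hc1 Hr1] := HW u1 (HU u1 Hu1).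
exists c0, (c1 :: cs); split; last exact: HR.
move=> x; rewrite !in_cons => /orP [/eqP ->|/orP [/eqP -> //|Hx]].
  by apply: Hcs; rewrite mem_head.
by apply: Hcs; rewrite in_cons Hx orbT.
Qed.

Lemma transfer (R : T -> T' -> Prop) (X : seq T) (Y : seq T') :
  (forall a b c e, R a b -> R c e -> R (a `&` c) (b `&` e)) ->
  (forall a b c e, R a b -> R c e -> R (a `|` c) (b `|` e)) ->
  (forall x, x \in X -> exists2 y, y \in Y & R x y) ->
  (forall w, is_meet X [::] w -> exists2 c, is_meet Y [::] c & R w c) ->
  (forall w, is_join X [::] w -> exists2 c, is_join Y [::] c & R w c) ->
  forall j, (forall u, GX X j u -> exists2 c, GX Y j c & R u c) /\
            (forall u, HX X j u -> exists2 c, HX Y j c & R u c).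
Proof.
move=> HM HJ HXY Hm Hj j.
suff HG : forall u, GX X j u -> exists2 c, GX Y j c & R u c.
  by split => //; apply: meetcl_transfer.
elim: j => [|j IH] /=; first exact: HXY.
apply: joincl_transfer => //; exact: meetcl_transfer.
Qed.

End Hom.

Section Dec.
Context {d : Order.disp_t} {T : latticeType d}.

Lemma meetcl_dec (x0 : T) xs k a : HX (x0 :: xs) k a ->
  a = join_ne x0 xs \/ exists u us, a = meet_ne u us /\
    (forall x, x \in u :: us -> GX (x0 :: xs) k x).
Proof.
move=> [[|u us] [HU HM]] /=; first by left.
by right; exists u, us.
Qed.

Lemma joincl_dec (x0 : T) xs k a : GX (x0 :: xs) k.+1 a ->
  exists u us, a = join_ne u us /\ (forall x, x \in u :: us -> HX (x0 :: xs) k x).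
Proof.
move=> [[|u us] [HU HM]] /=.
  exists (meet_ne x0 xs), [::]; split => // x; rewrite inE => /eqP ->.
  exact: bot_in_H.
by exists u, us.
Qed.
End Dec.

Arguments meet_ne_le {d T u us x}.
Arguments le_meet_ne {d T u us w}.
Arguments join_ne_ge {d T u us x}.
Arguments join_ne_le {d T u us w}.
Arguments GX_mono {d T X j k u}.
Arguments GX_S {d T X j u}.
Arguments G_in_H {d T X j u}.
Arguments H_in_G {d T X j u}.
Arguments HX_mono {d T X j k u}.
Arguments X_in_G {d T X j x}.
Arguments hom_meet_ne {d d' T T' g u us}.
Arguments hom_join_ne {d d' T T' g u us}.
Arguments hom_mono {d d' T T' g x y}.
Arguments meetcl_dec {d T x0 xs k a}.
Arguments joincl_dec {d T x0 xs k a}.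
Arguments gen_mono {d T m j S S' a}.
Arguments GX_nil {d T j u}.
Arguments HX_nil {d T j u}.


Section Main.
Set Implicit Arguments. Unset Strict Implicit.
Context {dA dB dD : Order.disp_t} {A : latticeType dA} {B : latticeType dB}
  {D : latticeType dD}.
Variables (g : A -> D) (h : B -> D) (ag : D -> A) (bh : D -> B) (P E : seq D)
  (z0 : A * B) (zs : seq (A * B)).
Hypotheses (Hgh : lattice_hom g) (Hhh : lattice_hom h)
  (Hhs : forall dd, exists y, h y = dd)
  (Hag : forall dd, is_greatest_preimage g dd (ag dd))
  (Hbh : forall dd, is_least_preimage h dd (bh dd))
  (HD : dean_D P)
  (HgenX : generates (map fst (z0 :: zs)))
  (HgenY : generates (map snd (z0 :: zs)))
  (HZpb : forall z, z \in z0 :: zs -> g z.1 = h z.2)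
  (HXE : forall x, x \in map fst (z0 :: zs) -> g x \in E)
  (HYE : forall y, y \in map snd (z0 :: zs) -> h y \in E)
  (HEZ : forall e, e \in E -> (ag e, bh e) \in z0 :: zs)
  (HPE : forall p, p \in P -> p \in E).

Local Notation Z := (z0 :: zs).
Local Notation X := (map fst (z0 :: zs)).
Local Notation Y := (map snd (z0 :: zs)).
Local Notation L := (in_sublat_gen (z0 :: zs)).
Local Notation topA := (join_ne z0.1 (map fst zs)).
Local Notation botA := (meet_ne z0.1 (map fst zs)).
Local Notation topB := (join_ne z0.2 (map snd zs)).
Local Notation botB := (meet_ne z0.2 (map snd zs)).

Lemma Lmeet a b c e : L (a, b) -> L (c, e) -> L (a `&` c, b `&` e).
Proof. move=> H1 H2; exact: (gen_meet H1 H2). Qed.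
Lemma Ljoin a b c e : L (a, b) -> L (c, e) -> L (a `|` c, b `|` e).
Proof. move=> H1 H2; exact: (gen_join H1 H2). Qed.
Lemma Lz z : z \in Z -> L z.
Proof. by move=> Hz; rewrite /in_sublat_gen; apply: gen_base. Qed.

Lemma Lpb a b : L (a, b) -> g a = h b.
Proof.
move=> H; have : forall p, L p -> g p.1 = h p.2; last by move/(_ _ H).
move=> p; elim=> [q Hq|q r _ H1 _ H2|q r _ H1 _ H2] /=.
- exact: HZpb.
- by rewrite Hgh.1 Hhh.1 H1 H2.
- by rewrite Hgh.2 Hhh.2 H1 H2.
Qed.

Lemma L_ne (p : A * B) ps : (forall q, q \in p :: ps -> L q) ->
  L (meet_ne p.1 (map fst ps), meet_ne p.2 (map snd ps)) /\
  L (join_ne p.1 (map fst ps), join_ne p.2 (map snd ps)).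
Proof.
case: p => p1 p2 /=; elim: ps => [|q ps IH] H /=; first by split; apply: H; rewrite mem_head.
have [|H1 H2] := IH.
  by move=> r Hr; apply: H; move: Hr; rewrite !in_cons => /orP [->|->]; rewrite ?orbT.
have Hq : L q by apply: H; rewrite !in_cons eqxx orbT.
by case: q Hq {H} => q1 q2 Hq; split; [apply: Lmeet | apply: Ljoin].
Qed.

Lemma Ltop : L (topA, topB).
Proof. by have [_ H] := @L_ne z0 zs (fun q Hq => Lz Hq). Qed.
Lemma Lbot : L (botA, botB).
Proof. by have [H _] := @L_ne z0 zs (fun q Hq => Lz Hq). Qed.

Lemma boundA a : botA <= a /\ a <= topA.
Proof. exact: (@gen_bounds _ _ z0.1 (map fst zs) HgenX a). Qed.
Lemma boundB b : botB <= b /\ b <= topB.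
Proof. exact: (@gen_bounds _ _ z0.2 (map snd zs) HgenY b). Qed.

Lemma ag_ge x dd : g x <= dd -> x <= ag dd.
Proof.
move=> Hx; have [H1 H2] := Hag dd.
apply: le_trans (leUl x (ag dd)) _; apply: H2.
by rewrite Hgh.2 H1; apply/join_idPr.
Qed.
Lemma bh_le y dd : dd <= h y -> bh dd <= y.
Proof.
move=> Hy; have [H1 H2] := Hbh dd.
apply: le_trans _ (leIl y (bh dd)); apply: H2.
by rewrite Hhh.1 H1; apply/meet_idPr.
Qed.
Lemma g_ag dd : g (ag dd) = dd. Proof. exact: (Hag dd).1. Qed.
Lemma h_bh dd : h (bh dd) = dd. Proof. exact: (Hbh dd).1. Qed.
Lemma agX e : e \in E -> ag e \in X.
Proof. by move/HEZ => H; apply/mapP; exists (ag e, bh e). Qed.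
Lemma bhY e : e \in E -> bh e \in Y.
Proof. by move/HEZ => H; apply/mapP; exists (ag e, bh e). Qed.
Lemma htop dd : dd <= h topB.
Proof. by have [y <-] := Hhs dd; apply: hom_mono => //; exact: (boundB y).2. Qed.

Lemma trAB j : (forall u, GX X j u -> exists2 c, GX Y j c & L (u, c)) /\
            (forall u, HX X j u -> exists2 c, HX Y j c & L (u, c)).
Proof.
apply: (@transfer _ _ _ _ (fun a b => L (a, b))).
- by move=> *; apply: Lmeet.
- by move=> *; apply: Ljoin.
- by move=> x /mapP [z Hz ->]; exists z.2; [apply/mapP; exists z | case: z Hz => ? ? /Lz].
- by move=> w /= ->; exists topB => //; exact: Ltop.
- by move=> w /= ->; exists botB => //; exact: Lbot.
Qed.

Lemma trBA j : (forall u, GX Y j u -> exists2 c, GX X j c & L (c, u)) /\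
            (forall u, HX Y j u -> exists2 c, HX X j c & L (c, u)).
Proof.
apply: (@transfer _ _ _ _ (fun b a => L (a, b))).
- by move=> *; apply: Lmeet.
- by move=> *; apply: Ljoin.
- by move=> x /mapP [z Hz ->]; exists z.1; [apply/mapP; exists z | case: z Hz => ? ? /Lz].
- by move=> w /= ->; exists topA => //; exact: Ltop.
- by move=> w /= ->; exists botA => //; exact: Lbot.
Qed.


Definition one' k := forall b u, GX Y k b -> GX X k u -> g u <= h b ->
  exists a', L (a', b) /\ u <= a'.
Definition two' k := forall a w, HX X k a -> HX Y k w -> g a <= h w ->
  exists b', L (a, b') /\ b' <= w.
Definition Pb b a0 u := exists a' b', L (a', b') /\ u <= a' /\ a' <= a0 /\ b' <= b.
Definition UB k b a0 := forall x, GX X k x -> g x <= h b -> x <= a0.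

Lemma Pb_down b a0 u u' : u' <= u -> Pb b a0 u -> Pb b a0 u'.
Proof.
move=> H [a' [b' [HL [H1 [H2 H3]]]]]; exists a', b'; do !split => //.
exact: le_trans H H1.
Qed.

Lemma Pb_join b a0 u v : Pb b a0 u -> Pb b a0 v -> Pb b a0 (u `|` v).
Proof.
move=> [a1 [b1 [HL1 [H11 [H12 H13]]]]] [a2 [b2 [HL2 [H21 [H22 H23]]]]].
exists (a1 `|` a2), (b1 `|` b2); do !split.
- exact: Ljoin.
- exact: leU2.
- by rewrite leUx H12 H22.
- by rewrite leUx H13 H23.
Qed.

Lemma Pb_join_ne b a0 u us : (forall x, x \in u :: us -> Pb b a0 x) ->
  Pb b a0 (join_ne u us).
Proof.
elim: us => [|v us IH] H /=; first by apply: H; rewrite mem_head.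
apply: Pb_join; first by apply: H; rewrite !in_cons eqxx orbT.
apply: IH => x; rewrite in_cons => /orP [/eqP ->|Hx]; apply: H.
  by rewrite mem_head.
by rewrite !in_cons Hx !orbT.
Qed.

Lemma Pb_bot b a0 : Pb b a0 botA.
Proof.
exists botA, botB; do !split => //; first exact: Lbot.
- exact: (boundA a0).1.
- exact: (boundB b).1.
Qed.

Lemma G0 k b a0 x : UB k b a0 -> x \in X -> g x <= h b -> Pb b a0 x.
Proof.
move=> HUB Hx Hgx; have HE := HXE Hx.
exists (ag (g x)), (bh (g x)); do !split.
- exact: (Lz (HEZ HE)).
- exact: ag_ge.
- by apply: HUB; [apply: X_in_G; exact: agX | rewrite g_ag].
- exact: bh_le.
Qed.

Lemma Pb_topA k b a0 : UB k b a0 -> g topA <= h b -> Pb b a0 topA.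
Proof.
move=> HUB Ht; apply: Pb_join_ne => x Hx; apply: (G0 HUB) => //.
exact: le_trans (hom_mono Hgh (join_ne_ge Hx)) Ht.
Qed.

Lemma dean_use (u0 : A) us (v : B) vs : g (meet_ne u0 us) <= h (join_ne v vs) ->
  (exists2 u', u' \in u0 :: us & g u' <= h (join_ne v vs)) \/
  (exists2 v', v' \in v :: vs & g (meet_ne u0 us) <= h v') \/
  (exists2 p, p \in P & g (meet_ne u0 us) <= p /\ p <= h (join_ne v vs)).
Proof.
rewrite (hom_meet_ne Hgh) (hom_join_ne Hhh) => /HD.
case=> [[s' Hs Hs']|[[t' Ht Ht']|[p Hp Hp']]].
- left; have : s' \in map g (u0 :: us) by [].
  by case/mapP => u' Hu' Es; exists u' => //; rewrite -Es.
- right; left; have : t' \in map h (v :: vs) by [].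
  by case/mapP => v' Hv' Et; exists v' => //; rewrite -Et.
- by right; right; exists p.
Qed.

Lemma Gs k (H2 : two' k) b v vs (Hb : b = join_ne v vs)
  (Hv : forall y, y \in v :: vs -> HX Y k y) a0 (HUB : UB k.+1 b a0) :
  forall j, (j <= k.+1)%N -> forall u, GX X j u -> g u <= h b -> Pb b a0 u.
Proof.
elim=> [|j IH] Hj u Hu Hub; first exact: (G0 HUB).
have [r [rs [Eu Hr]]] := joincl_dec Hu; subst u.
apply: Pb_join_ne => r' Hr'.
have Hgr : g r' <= h b := le_trans (hom_mono Hgh (join_ne_ge Hr')) Hub.
have Hr'H := Hr r' Hr'.
case: (meetcl_dec Hr'H) => [Er|[u0 [us [Er HU]]]]; first by rewrite Er in Hgr *; exact: (Pb_topA HUB).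
subst r'; move: (Hgr); rewrite {1}Hb.
case/dean_use => [[u' Hu' Hgu']|[[v' Hv' Hgv']|[p Hp [Hp1 Hp2]]]].
- apply: (Pb_down (meet_ne_le Hu')); apply: IH; first exact: ltnW.
    exact: HU.
  by rewrite Hb.
- have Hjk : (j <= k)%N by [].
  have [b' [HL Hb']] := H2 _ _ (HX_mono Hjk Hr'H) (Hv v' Hv') Hgv'.
  exists (meet_ne u0 us), b'; do !split => //.
    by apply: HUB => //; apply: H_in_G; exact: (HX_mono Hjk Hr'H).
  by apply: le_trans Hb' _; rewrite Hb; exact: join_ne_ge.
- have HpE := HPE Hp.
  exists (ag p), (bh p); do !split.
  + exact: (Lz (HEZ HpE)).
  + exact: ag_ge.
  + by apply: HUB; [apply: X_in_G; exact: agX | rewrite g_ag Hb].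
  + by apply: bh_le; rewrite Hb.
Qed.

Lemma Pb_all k b a0 : GX Y k b -> UB k b a0 -> (k = 0 \/ two' k.-1) ->
  forall u, GX X k u -> g u <= h b -> Pb b a0 u.
Proof.
move=> Hb HUB Hk u Hu Hub.
case: k Hb HUB Hk Hu Hub => [|k] Hb HUB Hk Hu Hub; first exact: (G0 HUB).
case: Hk => [//|H2].
have [v [vs [Eb Hv]]] := joincl_dec Hb.
exact: (Gs H2 Eb Hv HUB (leqnn _) Hu Hub).
Qed.

Lemma one_from k b u : GX Y k b -> (exists a' b', L (a', b') /\ u <= a' /\ b' <= b) ->
  exists a', L (a', b) /\ u <= a'.
Proof.
move=> Hb [a' [b' [HL [H1 H2]]]].
have [c _ Hc] := (trBA k).1 b Hb.
exists (c `|` a'); split; last exact: lexUr.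
by have := Ljoin Hc HL; rewrite (join_idPl H2).
Qed.

Lemma one'_of k : (k = 0 \/ two' k.-1) -> one' k.
Proof.
move=> Hk b u Hb Hu Hub.
have HUB : UB k b topA by move=> x _ _; exact: (boundA x).2.
have [a' [b' [HL [H1 [_ H3]]]]] := Pb_all Hb HUB Hk Hu Hub.
by apply: (one_from Hb); exists a', b'.
Qed.

Section Q.
Variables (k : nat) (H1 : one' k) (a : A) (Ha : HX X k a).

Definition LB w' := forall b0, (forall y, HX Y k y -> g a <= h y -> b0 <= y) -> b0 <= w'.
Definition Qa w := exists a' w', L (a', w') /\ a <= a' /\ w' <= w /\ LB w'.

Lemma LB_in y : HX Y k y -> g a <= h y -> LB y.
Proof. by move=> Hy Hay b0 H; apply: H. Qed.

Lemma Qa_up w w2 : w <= w2 -> Qa w -> Qa w2.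
Proof.
move=> H [a' [w' [HL [Ha' [Hw' HLB]]]]]; exists a', w'; do !split => //.
exact: le_trans Hw' H.
Qed.

Lemma Qa_meet x y : Qa x -> Qa y -> Qa (x `&` y).
Proof.
move=> [a1 [w1 [HL1 [H11 [H12 H13]]]]] [a2 [w2 [HL2 [H21 [H22 H23]]]]].
exists (a1 `&` a2), (w1 `&` w2); do !split.
- exact: Lmeet.
- by rewrite lexI H11 H21.
- exact: leI2.
- by move=> b0 H; rewrite lexI (H13 b0 H) (H23 b0 H).
Qed.

Lemma Qa_top : Qa topB.
Proof.
exists topA, topB; do !split => //; first exact: Ltop.
- exact: (boundA a).2.
- by apply: LB_in; [exact: top_in_H | exact: htop].
Qed.

Lemma Qa_meet_ne q qs : (forall x, x \in q :: qs -> Qa x) -> Qa (meet_ne q qs).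
Proof.
elim: qs => [|v qs IH] H /=; first by apply: H; rewrite mem_head.
apply: Qa_meet; first by apply: H; rewrite !in_cons eqxx orbT.
apply: IH => x; rewrite in_cons => /orP [/eqP ->|Hx]; apply: H.
  by rewrite mem_head.
by rewrite !in_cons Hx !orbT.
Qed.

Lemma Qa_HX j : (forall q, GX Y j q -> g a <= h q -> Qa q) ->
  forall r, HX Y j r -> g a <= h r -> Qa r.
Proof.
move=> HG r Hr Hgr; case: (meetcl_dec Hr) => [->|[q [qs [Er HQ]]]].
  exact: Qa_top.
subst r; apply: Qa_meet_ne => x Hx; apply: HG; first exact: HQ.
exact: le_trans Hgr (hom_mono Hhh (meet_ne_le Hx)).
Qed.

Lemma Qmain j : (j <= k)%N -> forall w, GX Y j w -> g a <= h w -> Qa w.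
Proof.
elim: j => [|j IH] Hj w Hw Hgw.
  have HE := HYE Hw.
  exists (ag (h w)), (bh (h w)); do !split.
  + exact: (Lz (HEZ HE)).
  + exact: ag_ge.
  + exact: bh_le.
  + by apply: LB_in; [apply: G_in_H; apply: X_in_G; exact: bhY | rewrite h_bh].
have [r [rs [Ew Hr]]] := joincl_dec Hw.
have [u [us [Ea HU]]] : exists u us, a = meet_ne u us /\
    (forall x, x \in u :: us -> GX X k x).
  case: (meetcl_dec Ha) => [Ea|//].
  exists topA, [::]; split => // x; rewrite inE => /eqP ->.
  by case: k H1 Ha Hj Ea => [//|k'] *; exact: top_in_G.
move: (Hgw); rewrite {1}Ew {1}Ea.
case/dean_use => [[u' Hu' Hgu']|[[v' Hv' Hgv']|[p Hp [Hp1 Hp2]]]].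
- rewrite -Ew in Hgu'.
  have [a' [HL Ha']] := H1 (GX_mono Hj Hw) (HU u' Hu') Hgu'.
  exists a', w; do !split => //.
  + by rewrite Ea; apply: le_trans (meet_ne_le Hu') Ha'.
  + by apply: LB_in => //; apply: G_in_H; exact: (GX_mono Hj Hw).
- rewrite -Ea in Hgv'.
  rewrite Ew; apply: (Qa_up (join_ne_ge Hv')).
  apply: (Qa_HX _ (Hr v' Hv')) => //.
  by move=> q Hq Hgq; apply: IH => //; exact: ltnW.
- have HpE := HPE Hp; rewrite -Ea in Hp1; rewrite -Ew in Hp2.
  exists (ag p), (bh p); do !split.
  + exact: (Lz (HEZ HpE)).
  + exact: ag_ge.
  + exact: bh_le.
  + by apply: LB_in; [apply: G_in_H; apply: X_in_G; exact: bhY | rewrite h_bh].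
Qed.

Lemma Qall w : HX Y k w -> g a <= h w -> Qa w.
Proof. apply: Qa_HX; exact: Qmain. Qed.

End Q.

Lemma two'_of k : one' k -> two' k.
Proof.
move=> H1 a w Ha Hw Hgw.
have [a' [w' [HL [Ha' [Hw' _]]]]] := Qall H1 Ha Hw Hgw.
have [c _ Hc] := (trAB k).2 a Ha.
exists (c `&` w'); split; last exact: le_trans (leIr _ _) Hw'.
by have := Lmeet Hc HL; rewrite (meet_idPl Ha').
Qed.

Lemma all_k k : one' k /\ two' k.
Proof.
elim: k => [|k [H1 H2]].
  have H1 : one' 0 by apply: one'_of; left.
  by split => //; apply: two'_of.
have H1' : one' k.+1 by apply: one'_of; right.
by split => //; apply: two'_of.
Qed.

Lemma final1 k b a : GX Y k b -> alpha_k X g k (h b) a -> L (a, b).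
Proof.
move=> Hb [Ul [HUl HJ]].
have HUB : UB k b a.
  move=> x Hx Hgx; have : x \in Ul by apply/HUl.
  case: Ul HUl HJ => [//|w ws] _ /= -> Hin; exact: join_ne_ge.
have Hk0 : forall k, k = 0 \/ two' k.-1.
  by case=> [|k']; [left | right; exact: (all_k k').2].
have HPb : forall w, w \in Ul -> Pb b a w.
  move=> w /HUl [Hw Hgw]; exact: (Pb_all Hb HUB (Hk0 k) Hw Hgw).
have [c Hc HLc] := (trBA k).1 b Hb.
have Hca : c <= a by apply: HUB => //; rewrite (Lpb HLc).
suff [a'' [HL [Ha'' Hall]]] : exists a'', L (a'', b) /\ a'' <= a /\
    forall w, w \in Ul -> w <= a''.
  have -> : a = a''.
    apply: le_anti; rewrite Ha'' andbT.
    case: Ul HUl HJ HPb Hall => [|w ws] _ /= -> _ Hall.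
      exact: (boundA a'').1.
    exact: join_ne_le.
  exact: HL.
elim: Ul {HUl HJ} HPb => [|w ws IH] HPb.
  by exists c; split => //; split.
have [|a'' [HL [Ha'' Hall]]] := IH.
  by move=> x Hx; apply: HPb; rewrite in_cons Hx orbT.
have [a' [b' [HL' [H1 [H2 H3]]]]] := HPb w (mem_head _ _).
exists (a'' `|` a'); split; first by have := Ljoin HL HL'; rewrite (join_idPl H3).
split; first by rewrite leUx Ha'' H2.
move=> x; rewrite in_cons => /orP [/eqP ->|Hx]; first exact: lexUr.
exact: lexUl (Hall x Hx).
Qed.

Lemma final2 k a b : HX X k a -> beta_k Y h k (g a) b -> L (a, b).
Proof.
move=> Ha [Wl [HWl HM]].
have H1 := (all_k k).1.
have Hbl : forall y, HX Y k y -> g a <= h y -> b <= y.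
  move=> y Hy Hgy; have : y \in Wl by apply/HWl.
  case: Wl HWl HM => [//|w ws] _ /= -> Hin; exact: meet_ne_le.
have HQ : forall w, w \in Wl -> Qa k a w.
  by move=> w /HWl [Hw Hgw]; exact: (Qall H1 Ha Hw Hgw).
have [c Hc HLc] := (trAB k).2 a Ha.
have Hbc : b <= c by apply: Hbl => //; rewrite (Lpb HLc).
suff [s [HL [Hbs Hall]]] : exists s, L (a, s) /\ b <= s /\
    forall w, w \in Wl -> s <= w.
  have -> : b = s.
    apply: le_anti; rewrite Hbs /=.
    case: Wl HWl HM HQ Hall => [|w ws] _ /= -> _ Hall.
      exact: (boundB s).2.
    exact: le_meet_ne.
  exact: HL.
elim: Wl {HWl HM} HQ => [|w ws IH] HQ.
  by exists c.
have [|s [HL [Hbs Hall]]] := IH.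
  by move=> x Hx; apply: HQ; rewrite in_cons Hx orbT.
have [a' [w' [HL' [H1' [H2' H3']]]]] := HQ w (mem_head _ _).
exists (s `&` w'); split; first by have := Lmeet HL HL'; rewrite (meet_idPl H1').
split; first by rewrite lexI Hbs (H3' b Hbl).
move=> x; rewrite in_cons => /orP [/eqP ->|Hx]; first exact: le_trans (leIr _ _) H2'.
exact: le_trans (leIl _ _) (Hall x Hx).
Qed.

End Main.


Theorem claim2 {dA dB dD : Order.disp_t}
  (A : latticeType dA) (B : latticeType dB) (D : latticeType dD)
  (X0 : seq A) (Y0 : seq B) (P : seq D) (g : A -> D) (h : B -> D)
  (ag bg : D -> A) (ah bh : D -> B) :
  generates X0 -> generates Y0 -> generates P -> dean_D P ->
  lattice_epi g -> bounded g -> lattice_epi h -> bounded h ->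
  (forall dd, is_greatest_preimage g dd (ag dd)) ->
  (forall dd, is_least_preimage g dd (bg dd)) ->
  (forall dd, is_greatest_preimage h dd (ah dd)) ->
  (forall dd, is_least_preimage h dd (bh dd)) ->
  let Z := Zlist X0 Y0 P g h ag bg ah bh in
  let X := map fst Z in
  let Y := map snd Z in
  forall k : nat,
    (forall (b : B) (a : A), GX Y k b -> alpha_k X g k (h b) a ->
       in_sublat_gen Z (a, b)) /\
    (forall (a : A) (b : B), HX X k a -> beta_k Y h k (g a) b ->
       in_sublat_gen Z (a, b)).
Proof.
move=> HX0 HY0 _ HD [Hgh _] _ [Hhh Hhs] _ Hag Hbg Hah Hbh Z X Y k.
subst X Y.
pose E := map g X0 ++ map h Y0 ++ P.
have HZ : forall z, z \in Z -> [/\ g z.1 \in E, h z.2 \in E & g z.1 = h z.2].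
  move=> z; rewrite /Z /Zlist /= !mem_cat => /or4P [] /mapP [w Hw ->] /=.
  - by split; rewrite ?(Hah _).1 ?map_f.
  - by split; rewrite ?(Hbg _).1 ?map_f ?orbT.
  - by split; rewrite ?(Hag _).1 ?(Hbh _).1 // -!mem_cat.
  - by split; rewrite ?(Hbg _).1 ?(Hah _).1 // -!mem_cat.
have HEZ : forall e, e \in E -> (ag e, bh e) \in Z.
  move=> e He; rewrite /Z /Zlist /= !mem_cat; apply/or4P; constructor 3.
  by apply/mapP; exists e.
have HPE : forall p, p \in P -> p \in E.
  by move=> p Hp; rewrite /E !mem_cat Hp !orbT.
have HgX : generates (map fst Z).
  move=> a; apply: (gen_mono _ (HX0 a)) => x Hx; apply/mapP; exists (x, ah (g x)) => //.
  by rewrite /Z /Zlist /= mem_cat map_f.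
have HgY : generates (map snd Z).
  move=> a; apply: (gen_mono _ (HY0 a)) => y Hy; apply/mapP; exists (bg (h y), y) => //.
  by rewrite /Z /Zlist /= !mem_cat map_f ?orbT.
move: HZ HEZ HgX HgY; clearbody Z; case: Z => [|z0 zs] HZ HEZ HgX HgY.
  by split => ? ? /= H; [case: (GX_nil H) | case: (HX_nil H)].
have HZpb : forall z, z \in z0 :: zs -> g z.1 = h z.2 by move=> z /HZ [].
have HXE : forall x, x \in map fst (z0 :: zs) -> g x \in E.
  by move=> x /mapP [z /HZ [H _ _] ->].
have HYE : forall y, y \in map snd (z0 :: zs) -> h y \in E.
  by move=> y /mapP [z /HZ [_ H _] ->].
split => ? ? Hb Ha.
- exact: (final1 Hgh Hhh Hhs Hag Hbh HD HgX HgY HZpb HXE HYE HEZ HPE Hb Ha).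
- exact: (final2 Hgh Hhh Hhs Hag Hbh HD HgX HgY HZpb HXE HYE HEZ HPE Hb Ha).
Qed.
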